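(* For every integer $k\ge1$, with $r_k$, $C_{\mathrm{Td}}$, $C_\sigma$, $C_\chi$ as below, one has \[ \frac{C_{\mathrm{Td}}}{C_\sigma+C_\chi}>4^k,\qquad \frac{C_\sigma}{C_\chi}\ge 3^k . \] Here $r_k$ is defined by $\binom{4k}{2k}B_k^2\,r_k=B_{2k}$, and $C_{\mathrm{Td}}=2^{4k+1}\big[(2^{4k-1}-1)(1-r_k)+(3-2^{2k+1})\big]$, $C_\sigma=1+r_k$, $C_\chi=2^{4k+1}(2^{2k}-1)^2\frac{B_{2k}}{(4k)!}$.
   Context: $B_m$ denotes the $m$-th Bernoulli number without sign, $B_m = \frac{(2m)!\,\zeta(2m)}{2^{2m-1}\pi^{2m}}$ (so $B_1=1/6$, $B_2=1/30$), where $\zeta$ is the Riemann zeta function. *)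

(* Defs.v *)
From Stdlib Require Import Reals Arith Factorial.
From Coquelicot Require Import Coquelicot.
Open Scope R_scope.

Definition zeta_nat (s : nat) : R :=
  Series (fun n : nat => / (INR (S n)) ^ s).

(* Unsigned Bernoulli number B_m = (2m)! zeta(2m) / (2^(2m-1) pi^(2m)),
   so B_1 = 1/6, B_2 = 1/30. Used for m >= 1. *)
Definition bern (m : nat) : R :=
  INR (fact (2 * m)) * zeta_nat (2 * m) / (2 ^ (2 * m - 1) * PI ^ (2 * m)).

Definition C_Td (k : nat) (r : R) : R :=
  2 ^ (4 * k + 1) * ((2 ^ (4 * k - 1) - 1) * (1 - r) + (3 - 2 ^ (2 * k + 1))).

Definition C_sigma (r : R) : R := 1 + r.

Definition C_chi (k : nat) : R :=
  2 ^ (4 * k + 1) * (2 ^ (2 * k) - 1) ^ 2 * (bern (2 * k) / INR (fact (4 * k))).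

(* Main.v *)
Require Import Defs.
From Stdlib Require Import Reals.
From Coquelicot Require Import Coquelicot.
From Stdlib Require Import Lra Lia Nsatz Factorial.
Open Scope R_scope.

Definition c (x : R) := cos x ^ 2.

Lemma FTC (F f : R -> R) (a b : R) :
  (forall x, is_derive F x (f x)) -> (forall x, continuous f x) ->
  RInt f a b = F b - F a.
Proof.
  intros HF Hc. apply is_RInt_unique. apply (is_RInt_derive F f a b).
  intros; apply HF. intros; apply Hc.
Qed.

Ltac cont := intros ?x; apply (@ex_derive_continuous R_AbsRing R_NormedModule); unfold c; auto_derive; auto.

Ltac dtac m x := unfold c; auto_derive; [auto|];
  let H := fresh in pose proof (sin2_cos2 x) as H; unfold Rsqr in H;
  destruct m as [|m]; simpl pred; rewrite ?S_INR; simpl pow;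
  [ simpl INR; nsatz | set (y := (cos x * (cos x * 1)) ^ m); nsatz ].

Lemma exR (f : R -> R) a b : (forall x, continuous f x) -> ex_RInt f a b.
Proof. intros H; apply (@ex_RInt_continuous R_CompleteNormedModule); intros; apply H. Qed.

Lemma RInt_lin2 (f g : R -> R) a b p q : (forall x, continuous f x) -> (forall x, continuous g x) ->
  RInt (fun x => p * f x + q * g x) a b = p * RInt f a b + q * RInt g a b.
Proof.
  intros Hf Hg.
  transitivity (RInt (fun x => plus (scal p (f x)) (scal q (g x))) a b). reflexivity.
  rewrite (@RInt_plus R_CompleteNormedModule). rewrite !(@RInt_scal R_CompleteNormedModule). reflexivity.
  apply exR; auto. apply exR; auto.
  apply (@ex_RInt_scal R_CompleteNormedModule), exR; auto. apply (@ex_RInt_scal R_CompleteNormedModule), exR; auto.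
Qed.

Lemma RInt_lin3 (f g h : R -> R) a b p q r : (forall x, continuous f x) -> (forall x, continuous g x) ->
  (forall x, continuous h x) ->
  RInt (fun x => p * f x + q * g x + r * h x) a b = p * RInt f a b + q * RInt g a b + r * RInt h a b.
Proof.
  intros Hf Hg Hh.
  assert (Ef : ex_RInt f a b) by (apply exR; auto).
  assert (Eg : ex_RInt g a b) by (apply exR; auto).
  assert (Eh : ex_RInt h a b) by (apply exR; auto).
  assert (E1 : ex_RInt (fun x => scal p (f x)) a b) by (apply (@ex_RInt_scal R_CompleteNormedModule); auto).
  assert (E2 : ex_RInt (fun x => scal q (g x)) a b) by (apply (@ex_RInt_scal R_CompleteNormedModule); auto).
  assert (E3 : ex_RInt (fun x => scal r (h x)) a b) by (apply (@ex_RInt_scal R_CompleteNormedModule); auto).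
  assert (E12 : ex_RInt (fun x => plus (scal p (f x)) (scal q (g x))) a b) by (apply (@ex_RInt_plus R_CompleteNormedModule); auto).
  transitivity (RInt (fun x => plus (plus (scal p (f x)) (scal q (g x))) (scal r (h x))) a b). reflexivity.
  rewrite (@RInt_plus R_CompleteNormedModule).
  rewrite (@RInt_plus R_CompleteNormedModule).
  rewrite !(@RInt_scal R_CompleteNormedModule). reflexivity.
  all: try exact Ef. all: try exact Eg. all: try exact Eh. all: try exact E1. all: try exact E2.
  all: try exact E3. all: try exact E12.
Qed.

Definition I n : R := RInt (fun x => c x ^ n) 0 (PI/2).
Definition J n : R := RInt (fun x => x^2 * c x ^ n) 0 (PI/2).
Definition L n : R := RInt (fun x => x^4 * c x ^ n) 0 (PI/2).

Lemma Wallis m : (2 * INR m + 2) * I (S m) + (- (2 * INR m + 1)) * I m = 0.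
Proof.
  unfold I. rewrite <- RInt_lin2 by cont.
  rewrite (FTC (fun x => sin x * cos x * c x ^ m)).
  - unfold c; rewrite sin_PI2, cos_PI2, sin_0, cos_0; ring.
  - intros x. dtac m x.
  - cont.
Qed.

Lemma R1 m : 1 * I (S m) + ((INR m + 1) * (2 * INR m + 2)) * J (S m) + (- ((INR m + 1) * (2 * INR m + 1))) * J m = 0.
Proof.
  unfold I, J. rewrite <- RInt_lin3 by cont.
  rewrite (FTC (fun x => x * c x ^ (S m) + (INR m + 1) * x^2 * cos x * sin x * c x ^ m)).
  - unfold c; rewrite sin_PI2, cos_PI2, sin_0, cos_0; simpl pow; ring.
  - intros x. dtac m x.
  - cont.
Qed.

Lemma R2 m : 6 * J (S m) + ((INR m + 1) * (2 * INR m + 2)) * L (S m) + (- ((INR m + 1) * (2 * INR m + 1))) * L m = 0.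
Proof.
  unfold J, L. rewrite <- RInt_lin3 by cont.
  rewrite (FTC (fun x => 2 * x^3 * c x ^ (S m) + (INR m + 1) * x^4 * cos x * sin x * c x ^ m)).
  - unfold c; rewrite sin_PI2, cos_PI2, sin_0, cos_0; simpl pow; field.
  - intros x. dtac m x.
  - cont.
Qed.

Lemma I0 : I 0 = PI / 2.
Proof.
  unfold I. rewrite (FTC (fun x => x)). lra.
  intros x. auto_derive; auto. cont.
Qed.

Lemma J0 : J 0 = (PI/2)^3 / 3.
Proof.
  unfold J. rewrite (FTC (fun x => x^3/3)). simpl; field.
  intros x. auto_derive; auto; try (simpl; field). cont.
Qed.

Lemma L0 : L 0 = (PI/2)^5 / 5.
Proof.
  unfold L. rewrite (FTC (fun x => x^5/5)). simpl; field.
  intros x. auto_derive; auto; try (simpl; field). cont.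
Qed.

Lemma xcos_le_sin x : 0 <= x <= PI/2 -> x * cos x <= sin x.
Proof.
  intros Hx.
  assert (H : 0 <= RInt (fun t => t * sin t) 0 x).
  { apply RInt_ge_0. lra. apply exR. cont.
    intros t Ht. apply Rmult_le_pos. lra. apply sin_ge_0; pose proof PI_RGT_0; lra. }
  rewrite (FTC (fun t => sin t - t * cos t)) in H.
  rewrite sin_0, cos_0 in H. lra.
  intros t. auto_derive; auto. ring. cont.
Qed.

Lemma c_nonneg x : 0 <= c x.
Proof. unfold c. apply pow2_ge_0. Qed.

Lemma I_pos n : 0 < I n.
Proof.
  induction n as [|n IH]. rewrite I0. pose proof PI_RGT_0; lra.
  pose proof (Wallis n). pose proof (pos_INR n).
  assert (I (S n) = (2 * INR n + 1) / (2 * INR n + 2) * I n) by (field_simplify_eq; lra).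
  rewrite H1. apply Rmult_lt_0_compat; auto. apply Rdiv_lt_0_compat; lra.
Qed.

Lemma J_nonneg n : 0 <= J n.
Proof.
  unfold J. apply RInt_ge_0. pose proof PI_RGT_0; lra. apply exR; cont.
  intros x _. apply Rmult_le_pos. apply pow2_ge_0. apply pow_le, c_nonneg.
Qed.

Lemma L_nonneg n : 0 <= L n.
Proof.
  unfold L. apply RInt_ge_0. pose proof PI_RGT_0; lra. apply exR; cont.
  intros x _. apply Rmult_le_pos. replace (x^4) with ((x^2)^2) by ring. apply pow2_ge_0. apply pow_le, c_nonneg.
Qed.

Lemma key_pt x m : 0 < x < PI/2 -> x^2 * c x ^ S m <= c x ^ m - c x ^ S m.
Proof.
  intros Hx. pose proof (xcos_le_sin x ltac:(lra)).
  assert (0 <= cos x) by (apply cos_ge_0; lra).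
  assert (0 <= x * cos x) by (apply Rmult_le_pos; lra).
  pose proof (sin2_cos2 x); unfold Rsqr in *.
  pose proof (pow_le _ m (c_nonneg x)).
  simpl pow. unfold c.
  set (y := (cos x ^ 2) ^ m) in *.
  assert ((x * cos x)^2 <= sin x ^ 2) by (apply pow_incr; lra).
  simpl in *. assert (E: sin x * sin x = 1 - cos x*cos x) by lra. assert (0 <= (1 - cos x*cos x - x*x*(cos x*cos x)) * y) by (apply Rmult_le_pos; [lra|assumption]). lra.
Qed.

Lemma J_bound m : J (S m) <= I m - I (S m).
Proof.
  unfold J, I.
  replace (RInt (fun x => c x ^ m) 0 (PI/2) - RInt (fun x => c x ^ S m) 0 (PI/2))
    with (1 * RInt (fun x => c x ^ m) 0 (PI/2) + (-1) * RInt (fun x => c x ^ S m) 0 (PI/2)) by ring.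
  rewrite <- RInt_lin2 by cont.
  apply RInt_le. pose proof PI_RGT_0; lra. apply exR; cont. apply exR; cont.
  intros x Hx. pose proof (key_pt x m Hx). lra.
Qed.

Lemma L_bound m : L (S m) <= (PI/2)^2 * (I m - I (S m)).
Proof.
  unfold L, I.
  replace ((PI/2)^2 * (RInt (fun x => c x ^ m) 0 (PI/2) - RInt (fun x => c x ^ S m) 0 (PI/2)))
    with ((PI/2)^2 * RInt (fun x => c x ^ m) 0 (PI/2) + (-(PI/2)^2) * RInt (fun x => c x ^ S m) 0 (PI/2)) by ring.
  rewrite <- RInt_lin2 by cont.
  apply RInt_le. pose proof PI_RGT_0; lra. apply exR; cont. apply exR; cont.
  intros x Hx. pose proof (key_pt x m Hx).
  assert (x^2 <= (PI/2)^2) by (apply pow_incr; lra).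
  assert (0 <= x^2 * c x ^ S m) by (apply Rmult_le_pos; [apply pow2_ge_0| apply pow_le, c_nonneg]).
  replace (x^4 * c x ^ S m) with (x^2 * (x^2 * c x ^ S m)) by ring.
  assert (0 <= x^2) by apply pow2_ge_0.
  nra.
Qed.

Definition b n := J n / I n.
Definition a n := L n / I n.
Definition f2 (n : nat) := / (INR (S n)) ^ 2.
Definition f4 (n : nat) := / (INR (S n)) ^ 4.

Lemma HI m : I m = (2*INR m+2)/(2*INR m+1) * I (S m).
Proof. pose proof (Wallis m). pose proof (pos_INR m). field_simplify_eq; lra. Qed.

Lemma b_rec m : b (S m) = b m - / (2 * (INR m + 1)^2).
Proof.
  pose proof (R1 m). pose proof (pos_INR m). pose proof (I_pos (S m)). pose proof (I_pos m).
  assert (HJ: J (S m) = ((INR m+1)*(2*INR m+1)*J m - I (S m))/((INR m+1)*(2*INR m+2))).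
  { field_simplify_eq; lra. }
  unfold b. rewrite HJ, (HI m). field. repeat split; lra.
Qed.

Lemma a_rec m : a (S m) = a m - 3 * b (S m) / (INR m + 1)^2.
Proof.
  pose proof (R2 m). pose proof (pos_INR m). pose proof (I_pos (S m)). pose proof (I_pos m).
  assert (HL: L (S m) = ((INR m+1)*(2*INR m+1)*L m - 6 * J (S m))/((INR m+1)*(2*INR m+2))).
  { field_simplify_eq; lra. }
  unfold a, b. rewrite HL, (HI m). field. repeat split; lra.
Qed.

Lemma b0 : b 0 = PI^2/12.
Proof. unfold b. rewrite J0, I0. pose proof PI_RGT_0. field. lra. Qed.

Lemma a0 : a 0 = PI^4/80.
Proof. unfold a. rewrite L0, I0. pose proof PI_RGT_0. field. lra. Qed.

Lemma sum_SnR (u : nat -> R) n : sum_n u (S n) = sum_n u n + u (S n).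
Proof. exact (@sum_Sn R_AbelianMonoid u n). Qed.

Lemma sum_OR (u : nat -> R) : sum_n u 0 = u 0%nat.
Proof. exact (@sum_O R_AbelianMonoid u). Qed.

Lemma b_closed N : b (S N) = PI^2/12 - /2 * sum_n f2 N.
Proof.
  induction N as [|N IH].
  - rewrite b_rec, b0, sum_OR. unfold f2. simpl. field.
  - rewrite b_rec, IH, sum_SnR. unfold f2. rewrite !S_INR.
    pose proof (pos_INR N). field. lra.
Qed.

Lemma a_closed N : @eq R (sum_n f4 N) (PI^4/90 + 4/3 * a (S N) - 4 * b (S N) ^ 2).
Proof.
  induction N as [|N IH].
  - rewrite a_rec, b_rec, a0, b0, sum_OR. unfold f4. simpl. field.
  - rewrite sum_SnR, IH.
    rewrite (a_rec (S N)), (b_rec (S N)). unfold f4. rewrite !S_INR.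
    pose proof (pos_INR N). field. lra.
Qed.

Lemma b_bound m : 0 <= b (S m) <= / (2 * INR m + 1).
Proof.
  pose proof (J_bound m). pose proof (J_nonneg (S m)). pose proof (I_pos (S m)). pose proof (pos_INR m).
  rewrite (HI m) in H.
  unfold b. split. apply Rdiv_le_0_compat; lra.
  apply (Rmult_le_reg_r (I (S m))); auto.
  replace (J (S m) / I (S m) * I (S m)) with (J (S m)) by (field; lra).
  replace (/ (2 * INR m + 1) * I (S m)) with ((2 * INR m + 2) / (2 * INR m + 1) * I (S m) - I (S m)) by (field; lra).
  lra.
Qed.

Lemma a_bound m : 0 <= a (S m) <= (PI/2)^2 * / (2 * INR m + 1).
Proof.
  pose proof (L_bound m). pose proof (L_nonneg (S m)). pose proof (I_pos (S m)). pose proof (pos_INR m).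
  rewrite (HI m) in H.
  unfold a. split. apply Rdiv_le_0_compat; lra.
  apply (Rmult_le_reg_r (I (S m))); auto.
  replace (L (S m) / I (S m) * I (S m)) with (L (S m)) by (field; lra).
  replace ((PI/2)^2 * / (2 * INR m + 1) * I (S m)) with ((PI/2)^2 * ((2 * INR m + 2) / (2 * INR m + 1) * I (S m) - I (S m))) by (field; lra).
  lra.
Qed.

Lemma lim_inv : is_lim_seq (fun n => / (2 * INR n + 1)) 0.
Proof.
  apply is_lim_seq_le_le with (u := fun _ => 0) (w := fun n => / INR (S n)).
  - intros n. pose proof (pos_INR n). rewrite S_INR. split.
    apply Rlt_le, Rinv_0_lt_compat; lra.
    apply Rinv_le_contravar; lra.
  - apply is_lim_seq_const.
  - replace (Finite 0) with (Rbar_inv p_infty) by reflexivity.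
    apply (is_lim_seq_inv (fun n => INR (S n)) p_infty).
    apply -> (is_lim_seq_incr_1 INR p_infty). apply is_lim_seq_INR.
    discriminate.
Qed.

Lemma lim_b : is_lim_seq (fun N => b (S N)) 0.
Proof.
  apply is_lim_seq_le_le with (u := fun _ => 0) (w := fun n => / (2 * INR n + 1)).
  intros n; apply b_bound. apply is_lim_seq_const. apply lim_inv.
Qed.

Lemma lim_a : is_lim_seq (fun N => a (S N)) 0.
Proof.
  apply is_lim_seq_le_le with (u := fun _ => 0) (w := fun n => (PI/2)^2 * / (2 * INR n + 1)).
  intros n; apply a_bound. apply is_lim_seq_const.
  replace (Finite 0) with (Rbar_mult ((PI/2)^2) 0) by (simpl; f_equal; ring).
  apply is_lim_seq_scal_l. apply lim_inv.
Qed.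

Lemma zeta2_series : is_series f2 (PI^2/6).
Proof.
  assert (H : is_lim_seq (sum_n f2) (PI^2/6)).
  { apply is_lim_seq_ext with (u := fun N => PI^2/6 - 2 * b (S N)).
    intros N. rewrite b_closed. field.
    assert (H0 : is_lim_seq (fun N => 2 * b (S N)) (2 * 0)).
    { apply (is_lim_seq_scal_l _ 2 0). apply lim_b. }
    assert (H1 := is_lim_seq_minus' _ _ _ _ (is_lim_seq_const (PI^2/6)) H0).
    replace (PI^2/6 - 2*0) with (PI^2/6) in H1 by ring. exact H1. }
  exact H.
Qed.

Lemma zeta4_series : is_series f4 (PI^4/90).
Proof.
  assert (H : is_lim_seq (sum_n f4) (PI^4/90)).
  { apply is_lim_seq_ext with (u := fun N => PI^4/90 + 4/3 * a (S N) - 4 * (b (S N) * b (S N))).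
    intros N. rewrite a_closed. ring.
    assert (H0 : is_lim_seq (fun N => 4/3 * a (S N)) (4/3 * 0)).
    { apply (is_lim_seq_scal_l _ (4/3) 0). apply lim_a. }
    assert (H2 : is_lim_seq (fun N => 4 * (b (S N) * b (S N))) (4 * (0 * 0))).
    { apply (is_lim_seq_scal_l _ 4 (0*0)). apply is_lim_seq_mult'; apply lim_b. }
    assert (H1 := is_lim_seq_plus' _ _ _ _ (is_lim_seq_const (PI^4/90)) H0).
    assert (H3 := is_lim_seq_minus' _ _ _ _ H1 H2).
    replace (PI^4/90 + 4/3*0 - 4*(0*0)) with (PI^4/90) in H3 by ring. exact H3. }
  exact H.
Qed.

Lemma zeta2 : zeta_nat 2 = PI^2/6.
Proof. unfold zeta_nat. apply is_series_unique. exact zeta2_series. Qed.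
Lemma zeta4 : zeta_nat 4 = PI^4/90.
Proof. unfold zeta_nat. apply is_series_unique. exact zeta4_series. Qed.

Lemma term_le (s t n : nat) : (t <= s)%nat -> / (INR (S n)) ^ s <= / (INR (S n)) ^ t.
Proof.
  intros H. pose proof (pos_INR n). rewrite S_INR.
  apply Rinv_le_contravar. apply pow_lt; lra. apply Rle_pow; lia || lra.
Qed.

Lemma term_pos (s n : nat) : 0 < / (INR (S n)) ^ s.
Proof. pose proof (pos_INR n). rewrite S_INR. apply Rinv_0_lt_compat, pow_lt; lra. Qed.

Lemma ex_zeta s : (2 <= s)%nat -> ex_series (fun n => / (INR (S n)) ^ s).
Proof.
  intros H. apply (@ex_series_le R_AbsRing R_CompleteNormedModule) with (b := f2).
  intros n. unfold norm; simpl. rewrite Rabs_pos_eq. apply term_le; auto.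
  apply Rlt_le, term_pos.
  exists (PI^2/6). exact zeta2_series.
Qed.

Lemma zeta_le s t : (2 <= t)%nat -> (t <= s)%nat -> zeta_nat s <= zeta_nat t.
Proof.
  intros Ht Hs. unfold zeta_nat. apply Series_le.
  intros n; split. apply Rlt_le, term_pos. apply term_le; auto.
  apply ex_zeta; auto.
Qed.

Lemma zeta_ge1 s : (2 <= s)%nat -> 1 <= zeta_nat s.
Proof.
  intros Hs. unfold zeta_nat. rewrite Series_incr_1 by (apply ex_zeta; auto).
  assert (0 <= Series (fun k => / INR (S (S k)) ^ s)).
  { assert (Z : Series (fun _ => 0) = 0).
    { rewrite (Series_ext (fun _ => 0) (fun n => 0 * 0)) by (intros; ring).
      rewrite Series_scal_l. ring. }
    rewrite <- Z.
    apply Series_le. intros n; split. lra. apply Rlt_le, term_pos.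
    apply (ex_series_incr_1 (fun n => / INR (S n) ^ s)), ex_zeta; auto. }
  replace (/ INR 1 ^ s) with 1 by (change (INR 1) with 1; rewrite pow1; field). lra.
Qed.

Lemma pow90 j : 4 * (4^(j+2) - 1)^2 * 3^(j+2) <= 90^(j+2).
Proof.
  induction j as [|j IH]. simpl; lra.
  replace (S j + 2)%nat with (S (j + 2)) by lia.
  assert (Hx : 16 <= 4^(j+2)).
  { replace 16 with (4^2) by ring. apply Rle_pow; lra || lia. }
  assert (HA : 0 < 3^(j+2)) by (apply pow_lt; lra).
  set (x := 4^(j+2)) in *. set (A := 3^(j+2)) in *.
  simpl pow. fold x A.
  assert (3 * (4*x-1)^2 <= 90 * (x-1)^2) by nra.
  nra.
Qed.

Lemma chi1 : C_chi 1 = 2/5.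
Proof.
  unfold C_chi, bern. simpl Nat.mul. simpl Nat.sub. rewrite zeta4. simpl.
  pose proof (INR_fact_neq_0 4). pose proof PI_RGT_0.
  assert (PI^4 <> 0) by (apply pow_nonzero; lra).
  field; lra.
Qed.

Lemma r1 r : Binomial.C (4 * 1) (2 * 1) * bern 1 ^ 2 * r = bern (2 * 1) -> r = 1/5.
Proof.
  intros Hr. unfold bern, Binomial.C in *.
  simpl Nat.mul in *. simpl Nat.sub in *. rewrite zeta2, zeta4 in *.
  simpl fact in *. simpl INR in *.
  pose proof PI_RGT_0.
  assert (PI^2 <> 0) by (apply pow_nonzero; lra). assert (PI^4 <> 0) by (apply pow_nonzero; lra).
  field_simplify in Hr; lra.
Qed.

Lemma case1 (r : R) :
  Binomial.C (4 * 1) (2 * 1) * bern 1 ^ 2 * r = bern (2 * 1) ->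
  C_Td 1 r / (C_sigma r + C_chi 1) > 4 ^ 1 /\
  C_sigma r / C_chi 1 >= 3 ^ 1.
Proof.
  intros Hr. apply r1 in Hr. subst r. rewrite chi1. unfold C_Td, C_sigma. simpl.
  split; lra.
Qed.

Lemma alg (q r X T3 : R) : 8 <= q -> 0 <= r <= 1/2 -> 0 < X -> T3 * X <= 1 -> 1 <= T3 ->
  8*q^2*((2*q^2-1)*(1-r) + (3 - 4*q)) / (1+r+X) > 2*q /\ (1+r)/X >= T3.
Proof.
  intros Hq Hr HX HT HT1.
  assert (X <= 1) by nra.
  split.
  - apply Rlt_gt. apply (Rmult_lt_reg_r (1+r+X)). lra.
    replace (8*q^2*((2*q^2-1)*(1-r) + (3 - 4*q)) / (1+r+X) * (1+r+X)) with (8*q^2*((2*q^2-1)*(1-r) + (3 - 4*q))) by (field; lra).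
    assert (P0 : 0 <= 2*q^2-1) by nra.
    assert (A : (2*q^2-1)*(1-r) >= (2*q^2-1)/2).
    { assert (0 <= (2*q^2-1)*(1/2 - r)) by (apply Rmult_le_pos; lra). lra. }
    assert (B : q^2 - 4*q + 5/2 >= 34) by nra.
    assert (8*q^2*((2*q^2-1)*(1-r) + (3 - 4*q)) >= 8*q^2*(q^2 - 4*q + 5/2)) by nra.
    nra.
  - apply Rle_ge. apply (Rmult_le_reg_r X). lra.
    replace ((1+r)/X*X) with (1+r) by (field; lra). nra.
Qed.

Lemma caseG (k : nat) (r : R) : (2 <= k)%nat ->
  Binomial.C (4 * k) (2 * k) * bern k ^ 2 * r = bern (2 * k) ->
  C_Td k r / (C_sigma r + C_chi k) > 4 ^ k /\
  C_sigma r / C_chi k >= 3 ^ k.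
Proof.
  intros Hk Hr.
  assert (E1: (2*(2*k) = 4*k)%nat) by lia.
  unfold C_chi, C_Td, C_sigma. unfold bern in *. rewrite E1 in *.
  unfold Binomial.C in Hr. replace (4*k - 2*k)%nat with (2*k)%nat in Hr by lia.
  assert (HF2 : 0 < INR (fact (2*k))) by apply INR_fact_lt_0.
  assert (HF4 : 0 < INR (fact (4*k))) by apply INR_fact_lt_0.
  set (F2 := INR (fact (2*k))) in *. set (F4 := INR (fact (4*k))) in *.
  assert (Hz2 : 1 <= zeta_nat (2*k)) by (apply zeta_ge1; lia).
  assert (Hz4 : 1 <= zeta_nat (4*k)) by (apply zeta_ge1; lia).
  assert (Hz42 : zeta_nat (4*k) <= zeta_nat (2*k)) by (apply zeta_le; lia).
  assert (Hz44 : zeta_nat (4*k) <= PI^4/90) by (rewrite <- zeta4; apply zeta_le; lia).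
  assert (HPI : 90 <= PI^4) by (pose proof (zeta_ge1 4 ltac:(lia)); rewrite zeta4 in H; lra).
  set (z2 := zeta_nat (2*k)) in *. set (z4 := zeta_nat (4*k)) in *.
  assert (e1 : 2^(2*k) = 2 * 2^(2*k-1)).
  { replace (2*k)%nat with (S (2*k-1)) at 1 by lia. reflexivity. }
  assert (e2 : 2^(4*k-1) = 2 * (2^(2*k-1))^2).
  { replace (4*k-1)%nat with (S ((2*k-1) + (2*k-1))) by lia. rewrite <- !tech_pow_Rmult, pow_add. ring. }
  assert (e3 : 2^(4*k+1) = 8 * (2^(2*k-1))^2).
  { replace (4*k+1)%nat with (S (S (S ((2*k-1) + (2*k-1))))) by lia. rewrite <- !tech_pow_Rmult, pow_add. ring. }
  assert (e4 : 2^(2*k+1) = 4 * 2^(2*k-1)).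
  { replace (2*k+1)%nat with (S (S (2*k-1))) by lia. rewrite <- !tech_pow_Rmult. ring. }
  assert (e5 : 4^k = 2 * 2^(2*k-1)).
  { rewrite <- e1. rewrite pow_mult. f_equal. ring. }
  assert (e6 : PI^(4*k) = (PI^4)^k) by (rewrite pow_mult; reflexivity).
  assert (e7 : (PI^(2*k))^2 = (PI^4)^k).
  { rewrite <- e6, <- pow_mult. f_equal. lia. }
  assert (Hq : 8 <= 2^(2*k-1)).
  { replace 8 with (2^3) by ring. apply Rle_pow; (lra || lia). }
  rewrite e1, e2, e3, e4, e5, e6 in *.
  set (q := 2^(2*k-1)) in *.
  assert (HP : 0 < PI^(2*k)) by (apply pow_lt, PI_RGT_0).
  set (Pk := PI^(2*k)) in *.
  set (Q := (PI^4)^k) in *.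
  assert (HQ : 0 < Q) by (rewrite <- e7; nra).
  assert (Hr2 : r = z4 / (2 * z2^2)).
  { assert (Hrr : F4 / (F2 * F2) * (F2 * z2 / (q * Pk)) ^ 2 * r = (F4 / (2 * Q * q^2)) * (2 * z2^2 * r)).
    { rewrite <- e7. field. repeat split; lra. }
    rewrite Hrr in Hr.
    replace (F4 * z4 / (2 * q ^ 2 * Q)) with ((F4 / (2 * Q * q^2)) * z4) in Hr by (field; split; lra).
    apply Rmult_eq_reg_l in Hr. rewrite <- Hr. field. lra.
    apply Rgt_not_eq. apply Rdiv_lt_0_compat. lra. apply Rmult_lt_0_compat; [lra| apply pow_lt; lra]. }
  assert (Hr3 : 0 <= r <= 1/2).
  { rewrite Hr2. split. apply Rdiv_le_0_compat; nra.
    apply (Rmult_le_reg_r (2 * z2^2)). nra. unfold Rdiv. rewrite Rmult_assoc, Rinv_l by nra. nra. }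
  replace (8 * q ^ 2 * (2 * q - 1) ^ 2 * (F4 * z4 / (2 * q ^ 2 * Q) / F4))
    with (4 * (2*q-1)^2 * z4 / Q) by (field; repeat split; lra).
  destruct k as [|[|j]]; [lia|lia|].
  assert (Hpow := pow90 j). replace (j+2)%nat with (S (S j)) in Hpow by lia.
  rewrite e5 in Hpow. fold q in Hpow.
  assert (HQ2 : Q >= PI^4 * 90^(S j)).
  { unfold Q. rewrite <- tech_pow_Rmult. apply Rle_ge, Rmult_le_compat_l. lra. apply pow_incr. lra. }
  assert (HT : 3^(S (S j)) * (4 * (2*q-1)^2 * z4 / Q) <= 1).
  { assert (H3 : 0 < 3^(S (S j))) by (apply pow_lt; lra).
    assert (Hc : 0 <= (2*q-1)^2) by apply pow2_ge_0.
    assert (90^(S (S j)) = 90 * 90^(S j)) by reflexivity.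
    assert (0 < 90^(S j)) by (apply pow_lt; lra).
    apply (Rmult_le_reg_r Q). lra.
    replace (3 ^ S (S j) * (4 * (2 * q - 1) ^ 2 * z4 / Q) * Q) with ((4 * (2 * q - 1) ^ 2 * 3 ^ S (S j)) * z4) by (field; lra).
    assert (4 * (2 * q - 1) ^ 2 * 3 ^ S (S j) * z4 <= 4 * (2 * q - 1) ^ 2 * 3 ^ S (S j) * (PI^4/90)).
    { apply Rmult_le_compat_l. nra. lra. }
    assert (4 * (2 * q - 1) ^ 2 * 3 ^ S (S j) * (PI^4/90) <= 90 ^ S (S j) * (PI^4/90)).
    { apply Rmult_le_compat_r. nra. lra. }
    nra. }
  apply alg; auto.
  apply Rdiv_lt_0_compat; [|lra]. assert (0 < (2*q-1)^2) by (apply pow_lt; lra). nra.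
  apply pow_R1_Rle; lra.
Qed.

Theorem corollary1 (k : nat) (r : R) :
  (1 <= k)%nat ->
  Binomial.C (4 * k) (2 * k) * bern k ^ 2 * r = bern (2 * k) ->
  C_Td k r / (C_sigma r + C_chi k) > 4 ^ k /\
  C_sigma r / C_chi k >= 3 ^ k.
Proof.
  intros Hk Hr. destruct k as [|[|j]].
  - lia.
  - apply case1; auto.
  - apply caseG; auto. lia.
Qed.
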